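(* Let $a,b>1$ be real numbers, $h_n:=\frac{1}{a^n}$ and $k_n:=\frac{1}{b^n}$. Let $f$ be a real valued function defined on $D=\{0,h_1,-k_1,h_2,-k_2,\ldots\}$ and let $R,L$ be real numbers. Assume $f(0)=0$ and \[\frac{f(h_n)}{h_n}\to R\quad\text{and}\quad\frac{f(-k_n)}{-k_n}\to L.\] Then: (i) if $\frac{\log a}{\log b}$ is a rational number, then $R$ and $L$ are the only accumulation points of the set of sequential cord derivatives of $f$ at $0$; (ii) if $\frac{\log a}{\log b}$ is irrational, then every real number between $L$ and $R$ is a sequential cord derivative of $f$ at $0$.
   Context: $L'\in\overline{\mathbb{R}}=\mathbb{R}\cup\{\pm\infty\}$ is a sequential cord derivative of $f$ at $0$ if there are sequences $h'_n>0$, $k'_n>0$ with $h'_n\to0$, $k'_n\to0$, $h'_n\in D$, $-k'_n\in D$ for all $n$, and $\frac{f(h'_n)-f(-k'_n)}{h'_n+k'_n}\to L'$. *)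

(* Defs.v *)
From HB Require Import structures.
From mathcomp Require Import all_boot all_order all_algebra.
From mathcomp Require Import all_classical all_reals all_analysis.
Set Implicit Arguments. Unset Strict Implicit. Unset Printing Implicit Defensive.
Import Order.TTheory GRing.Theory Num.Theory.
Import numFieldNormedType.Exports.
Local Open Scope classical_set_scope.
Local Open Scope ring_scope.

Definition Dset (R : realType) (a b : R) : set R :=
  [set x | x = 0 \/ exists2 n : nat, (0 < n)%N & (x = a ^- n \/ x = - b ^- n)].

Definition seq_cord_deriv (R : realType) (a b : R) (f : R -> R) (l : \bar R) : Prop :=
  exists hp kp : nat -> R,
    (forall n, 0 < hp n) /\ (forall n, 0 < kp n) /\
    hp @ \oo --> (0 : R) /\ kp @ \oo --> (0 : R) /\
    (forall n, Dset a b (hp n)) /\ (forall n, Dset a b (- kp n)) /\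
    (fun n => ((f (hp n) - f (- kp n)) / (hp n + kp n))%:E) @ \oo --> l.

(* Main.v *)
Require Import Defs.
From HB Require Import structures.
From mathcomp Require Import all_boot all_order all_algebra.
From mathcomp Require Import all_classical all_reals all_analysis.
From mathcomp Require Import ring lra.
Import Order.TTheory GRing.Theory Num.Theory.
Import numFieldNormedType.Exports.
Local Open Scope classical_set_scope.
Local Open Scope ring_scope.
Set Warnings "-notation-overridden,-ambiguous-paths,-notation-incompatible-prefix,-deprecated".
Lemma ev_nat {P : nat -> Prop} :
  (\forall n \near \oo, P n) -> exists N, forall n, (N <= n)%N -> P n.
Proof. by case=> N _ HN; exists N => n /HN. Qed.

Lemma nat_ev {P : nat -> Prop} N :
  (forall n, (N <= n)%N -> P n) -> \forall n \near \oo, P n.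
Proof. by move=> H; exists N. Qed.

Lemma powV_gt0 {R : realType} {c : R} n : 1 < c -> 0 < c ^- n.
Proof. by move=> c1; rewrite invr_gt0 exprn_gt0// (lt_trans ltr01). Qed.

Lemma powV_lt {R : realType} {c : R} {m n} : 1 < c -> c ^- m < c ^- n -> (n < m)%N.
Proof.
move=> c1 h; rewrite -(ltr_eXn2l c1) -ltf_pV2 ?posrE ?exprn_gt0 ?(lt_trans ltr01)//.
Qed.

Lemma seq_pow_cvg (R : realType) (c : R) (g : R -> R) (l : R) (x : nat -> R) :
  1 < c -> (fun n => g (c ^- n)) @ \oo --> l -> x @ \oo --> (0:R) ->
  (forall n, exists m, x n = c ^- m) -> (fun n => g (x n)) @ \oo --> l.
Proof.
move=> c1 Hg Hx Hm; apply/cvgrPdist_lt => e e0.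
have [N HN] := ev_nat (@cvgr_dist_lt _ _ _ _ _ _ _ Hg _ e0).
have cN : 0 < c ^- N by exact: powV_gt0.
have [M HM] := ev_nat (@cvgr_dist_lt _ _ _ _ _ _ _ Hx _ cN).
apply: (@nat_ev _ M) => n Mn.
have := HM n Mn; case: (Hm n) => m ->.
rewrite sub0r normrN ger0_norm; last exact/ltW/powV_gt0.
move=> /(powV_lt c1) Nm; apply: HN; exact: ltnW.
Qed.
Lemma cord_id {R : realType} (x y fx fy : R) : 0 < x -> 0 < y ->
  (fx - fy) / (x + y) = x / (x + y) * (fx / x) + (1 - x / (x + y)) * (fy / (- y)).
Proof.
move=> x0 y0; have xy : x + y != 0 by rewrite gt_eqF// addr_gt0.
have xn : x != 0 by rewrite gt_eqF. have yn : y != 0 by rewrite gt_eqF.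
field. by rewrite xn yn xy.
Qed.
Lemma core_A {R : realType} (a b : R) (f : R -> R) (Rr : R) (hp : nat -> R) : 1 < a -> 1 < b ->
  (fun n => f (a ^- n) / a ^- n) @ \oo --> Rr -> (forall n, 0 < hp n) ->
  hp @ \oo --> (0:R) -> (forall n, Dset a b (hp n)) ->
  (fun n => f (hp n) / hp n) @ \oo --> Rr.
Proof.
move=> a1 b1 HR hp0 Hh HD.
apply: (@seq_pow_cvg _ a (fun x => f x / x) _ _ a1 HR Hh) => n.
case: (HD n) => [h0|[m _ [->|h]]]; first by move: (hp0 n); rewrite h0 ltxx.
  by exists m.
by move: (hp0 n); rewrite h oppr_gt0 ltNge (ltW (powV_gt0 _ b1)).
Qed.

Lemma core_B {R : realType} (a b : R) (f : R -> R) (Ll : R) (kp : nat -> R) : 1 < a -> 1 < b ->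
  (fun n => f (- b ^- n) / (- b ^- n)) @ \oo --> Ll -> (forall n, 0 < kp n) ->
  kp @ \oo --> (0:R) -> (forall n, Dset a b (- kp n)) ->
  (fun n => f (- kp n) / (- kp n)) @ \oo --> Ll.
Proof.
move=> a1 b1 HL kp0 Hk HD.
apply: (@seq_pow_cvg _ b (fun x => f (- x) / (- x)) _ _ b1 HL Hk) => n.
case: (HD n) => [h0|[m _ [h|h]]].
- by move: (kp0 n); rewrite -[kp n]opprK h0 oppr0 ltxx.
- by move: (kp0 n); rewrite -oppr_lt0 h ltNge (ltW (powV_gt0 _ a1)).
- by exists m; apply: oppr_inj.
Qed.

Lemma core1 {R : realType} (Rr Ll : R) (A B t : nat -> R) :
  A @ \oo --> Rr -> B @ \oo --> Ll -> (forall n, 0 < t n < 1) ->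
  (fun n => t n * A n + (1 - t n) * B n - (t n * Rr + (1 - t n) * Ll)) @ \oo --> 0.
Proof.
move=> HA HB Ht; apply/cvgrPdist_lt => e e0.
have e2 : 0 < e / 2 by rewrite divr_gt0.
have [N1 H1] := ev_nat (@cvgr_dist_lt _ _ _ _ _ _ _ HA _ e2).
have [N2 H2] := ev_nat (@cvgr_dist_lt _ _ _ _ _ _ _ HB _ e2).
apply: (@nat_ev _ (maxn N1 N2)) => n; rewrite geq_max => /andP[n1 n2].
move: (H1 n n1) (H2 n n2) (Ht n); rewrite !ltr_distl => /andP[a1 a2] /andP[b1 b2] /andP[t0 t1].
apply/andP; split; nra.
Qed.
Lemma pow_seq_cvg0 {R : realType} (c : R) (m : nat -> nat) : 1 < c ->
  (forall n, (n <= m n)%N) -> (fun n => c ^- m n) @ \oo --> (0:R).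
Proof.
move=> c1 Hm.
have c0 : 0 < c by exact: (lt_trans ltr01).
apply: (@squeeze_cvgr _ _ _ _ (fun=> 0) (fun n => c^-1 ^+ n)).
- apply: (@nat_ev _ 0) => n _; rewrite (ltW (powV_gt0 _ c1)) /= exprVn.
  rewrite lef_pV2 ?posrE ?exprn_gt0// (ler_eXn2l c1); exact: Hm.
- exact: cvg_cst.
- apply: cvg_expr; rewrite ger0_norm ?invr_ge0 ?(ltW c0)//.
  by rewrite invf_lt1.
Qed.

Lemma cvg_Q {R : realType} (a b : R) (f : R -> R) (Rr Ll tau : R) (hp kp : nat -> R) :
  1 < a -> 1 < b ->
  (fun n => f (a ^- n) / a ^- n) @ \oo --> Rr ->
  (fun n => f (- b ^- n) / (- b ^- n)) @ \oo --> Ll ->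
  (forall n, 0 < hp n) -> (forall n, 0 < kp n) ->
  hp @ \oo --> (0:R) -> kp @ \oo --> (0:R) ->
  (forall n, Dset a b (hp n)) -> (forall n, Dset a b (- kp n)) ->
  (fun n => hp n / (hp n + kp n)) @ \oo --> tau ->
  (fun n => (f (hp n) - f (- kp n)) / (hp n + kp n)) @ \oo --> tau * Rr + (1 - tau) * Ll.
Proof.
move=> a1 b1 HR HL hp0 kp0 Hh Hk Dh Dk Ht.
have HA := @core_A _ a b f Rr hp a1 b1 HR hp0 Hh Dh.
have HB := @core_B _ a b f Ll kp a1 b1 HL kp0 Hk Dk.
set t := fun n => hp n / (hp n + kp n).
have t01 : forall n, 0 < t n < 1.
  move=> n; rewrite /t divr_gt0 ?addr_gt0//= ltr_pdivrMr ?addr_gt0// mul1r.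
  by rewrite ltrDl.
have H1 := @core1 _ Rr Ll _ _ _ HA HB t01.
have H2 : (fun n => t n * Rr + (1 - t n) * Ll) @ \oo --> tau * Rr + (1 - tau) * Ll.
  apply: cvgD; first exact: cvgMl.
  apply: cvgMl; apply: cvgB => //; exact: cvg_cst.
rewrite -[X in _ --> X]add0r.
suff -> : (fun n => (f (hp n) - f (- kp n)) / (hp n + kp n)) =
  ((fun n => t n * (f (hp n) / hp n) + (1 - t n) * (f (- kp n) / (- kp n)) - (t n * Rr + (1 - t n) * Ll)) + (fun n => t n * Rr + (1 - t n) * Ll)).
  exact: cvgD H1 H2.
apply/funext => n; rewrite cord_id//; by rewrite [RHS]/= subrK.
Qed.
Lemma cvgEFin {R : realType} {u : nat -> R} {x} : u @ \oo --> x -> (fun n => (u n)%:E) @ \oo --> x%:E.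
Proof. move=> H; apply: cvg_EFin => //; exact: (@nat_ev _ 0). Qed.

Lemma cvg_W {R : realType} (a b : R) (f : R -> R) (Rr Ll : R) (hp kp : nat -> R) (l : \bar R) :
  1 < a -> 1 < b ->
  (fun n => f (a ^- n) / a ^- n) @ \oo --> Rr ->
  (fun n => f (- b ^- n) / (- b ^- n)) @ \oo --> Ll ->
  (forall n, 0 < hp n) -> (forall n, 0 < kp n) ->
  hp @ \oo --> (0:R) -> kp @ \oo --> (0:R) ->
  (forall n, Dset a b (hp n)) -> (forall n, Dset a b (- kp n)) ->
  (fun n => ((f (hp n) - f (- kp n)) / (hp n + kp n))%:E) @ \oo --> l ->
  (fun n => (hp n / (hp n + kp n) * Rr + (1 - hp n / (hp n + kp n)) * Ll)%:E) @ \oo --> l.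
Proof.
move=> a1 b1 HR HL hp0 kp0 Hh Hk Dh Dk HQ.
have HA := @core_A _ a b f Rr hp a1 b1 HR hp0 Hh Dh.
have HB := @core_B _ a b f Ll kp a1 b1 HL kp0 Hk Dk.
set t := fun n => hp n / (hp n + kp n).
have t01 : forall n, 0 < t n < 1.
  move=> n; rewrite /t divr_gt0 ?addr_gt0//= ltr_pdivrMr ?addr_gt0// mul1r.
  by rewrite ltrDl.
have H1 := @core1 _ Rr Ll _ _ _ HA HB t01.
have H1N : (fun n => - (t n * (f (hp n) / hp n) + (1 - t n) * (f (- kp n) / - kp n) -
    (t n * Rr + (1 - t n) * Ll))) @ \oo --> (0:R).
  rewrite -oppr0; exact: cvgN.
have H2 := cvgEFin H1N.
have := cvgeD (fin_num_adde_defl _ _) HQ H2; rewrite adde0 => H3.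
suff E : (fun n => (t n * Rr + (1 - t n) * Ll)%:E) = 
  ((fun n => ((f (hp n) - f (- kp n)) / (hp n + kp n))%:E) \+ 
   (fun n => (- (t n * (f (hp n) / hp n) + (1 - t n) * (f (- kp n) / - kp n) -
    (t n * Rr + (1 - t n) * Ll)))%:E))%E.
  by rewrite -E in H3; exact: H3.
apply/funext => n /=; rewrite -EFinD cord_id//; congr (_%:E); rewrite /t; ring.
Qed.
Lemma build_scd {R : realType} (a b : R) (f : R -> R) (Rr Ll tau : R) (m j : nat -> nat) :
  1 < a -> 1 < b ->
  (fun n => f (a ^- n) / a ^- n) @ \oo --> Rr ->
  (fun n => f (- b ^- n) / (- b ^- n)) @ \oo --> Ll ->
  (forall n, (n < m n)%N) -> (forall n, (n < j n)%N) ->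
  (fun n => a ^- (m n) / (a ^- (m n) + b ^- (j n))) @ \oo --> tau ->
  seq_cord_deriv a b f (tau * Rr + (1 - tau) * Ll)%:E.
Proof.
move=> a1 b1 HR HL Hm Hj Ht.
have hp0 : forall n, 0 < a ^- (m n) by move=> n; exact: powV_gt0.
have kp0 : forall n, 0 < b ^- (j n) by move=> n; exact: powV_gt0.
have Hh := @pow_seq_cvg0 _ a m a1 (fun n => ltnW (Hm n)).
have Hk := @pow_seq_cvg0 _ b j b1 (fun n => ltnW (Hj n)).
have Dh : forall n, Dset a b (a ^- (m n)).
  move=> n; right; exists (m n); last by left.
  exact: leq_ltn_trans (leq0n n) (Hm n).
have Dk : forall n, Dset a b (- b ^- (j n)).
  move=> n; right; exists (j n); last by right.
  exact: leq_ltn_trans (leq0n n) (Hj n).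
exists (fun n => a ^- (m n)), (fun n => b ^- (j n)).
do 6!(split => //).
apply: cvgEFin.
exact: (@cvg_Q _ a b f Rr Ll tau _ _ a1 b1 HR HL hp0 kp0 Hh Hk Dh Dk Ht).
Qed.
Definition Gm {R : realType} (la lb : R) (x : R) :=
  exists i k : int, x = i%:~R * la + k%:~R * lb.

Lemma Gm_sub {R : realType} {la lb x y : R} : Gm la lb x -> Gm la lb y -> Gm la lb (x - y).
Proof.
move=> [i [k ->]] [i' [k' ->]]; exists (i - i'), (k - k').
rewrite !intrB; ring.
Qed.

Lemma Gm_mul {R : realType} {la lb x : R} (n : int) : Gm la lb x -> Gm la lb (n%:~R * x).
Proof.
move=> [i [k ->]]; exists (n * i), (n * k).
rewrite !intrM; ring.
Qed.

Lemma small {R : realType} (la lb : R) : 0 < la -> 0 < lb ->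
  ~ (exists q : rat, la / lb = ratr q) ->
  forall e, 0 < e -> exists i k : int, 0 < i%:~R * la + k%:~R * lb < e.
Proof.
move=> la0 lb0 Hq.
pose P := [set x | Gm la lb x /\ 0 < x].
have Pla : P la by split => //; exists 1, 0; rewrite mul1r mul0r addr0.
have hlb : has_lbound P by exists 0 => x [_ /ltW].
have hinf : has_inf P by split => //; exists la.
have ge := ge_inf hlb.
have [g0le|g0gt] := leP (inf P) 0.
  move=> e e0; have [x [[i [k ->]] x0] xe] := inf_adherent e0 hinf.
  exists i, k; rewrite x0 /=; apply: (lt_le_trans xe); lra.
exfalso.
have Pg0 : P (inf P).
  have [x Px xlt] := inf_adherent g0gt hinf.
  have gx := ge x Px.
  have [xg|xg] := leP x (inf P).
    by have -> : inf P = x by apply/eqP; rewrite eq_le gx xg.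
  have xg' : 0 < x - inf P by rewrite subr_gt0.
  have [y Py ylt] := inf_adherent xg' hinf.
  have gy := ge y Py.
  have Pxy : P (x - y).
    split; first exact: Gm_sub Px.1 Py.1.
    rewrite subr_gt0; move: ylt; rewrite addrC subrK //.
  have := ge _ Pxy; lra.
have mult : forall z, Gm la lb z -> exists n : int, z = n%:~R * inf P.
  move=> z Gz; exists (Num.floor (z / inf P)).
  have := floor_itv (z / inf P); set n := Num.floor _ => /andP[n1 n2].
  have Gr : Gm la lb (z - n%:~R * inf P) by apply: Gm_sub Gz (Gm_mul n Pg0.1).
  have [r0|r0] := leP (z - n%:~R * inf P) 0.
    apply/eqP; rewrite eq_le; apply/andP; split; first by rewrite -subr_le0.
    by rewrite -ler_pdivlMr.
  have := ge _ (conj Gr r0).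
  rewrite intrD in n2.
  move: n2; rewrite ltr_pdivrMr// => n2. lra.
have [n1 e1] : exists n : int, la = n%:~R * inf P.
  by apply: mult; exists 1, 0; rewrite mul1r mul0r addr0.
have [n2 e2] : exists n : int, lb = n%:~R * inf P.
  by apply: mult; exists 0, 1; rewrite mul1r mul0r add0r.
apply: Hq; exists ((n1%:~R : rat) / n2%:~R).
rewrite fmorph_div !rmorph_int e1 e2.
have n20 : (n2%:~R : R) != 0 by apply/eqP => h; move: lb0; rewrite e2 h mul0r ltxx.
have g0 : inf P != 0 by rewrite gt_eqF.
field; by rewrite n20 g0.
Qed.
Lemma int_cases {R : realType} (z : int) : (z%:~R : R) = 0 \/ (1 <= (z%:~R : R)) \/ ((z%:~R : R) <= -1).
Proof.
have [->|zn] := eqVneq z 0; first by left.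
right; have [zp|zn'] := ltP 0 z.
  by left; rewrite ler1z -gtz0_ge1.
right; have zlt : z < 0 by rewrite lt_neqAle zn zn'.
rewrite -[z]opprK intrN lerN2 ler1z -gtz0_ge1 oppr_gt0 //.
Qed.

Lemma natpair {R : realType} {la lb : R} : 0 < la -> 0 < lb ->
  ~ (exists q : rat, la / lb = ratr q) ->
  forall e, 0 < e -> exists p q : nat, 0 < `|p%:R * la - q%:R * lb| < e.
Proof.
move=> la0 lb0 Hq e e0.
have e'0 : 0 < Num.min e (Num.min la lb) by rewrite !lt_min e0 la0 lb0.
have [i [k /andP[s0 se]]] := @small _ la lb la0 lb0 Hq _ e'0.
move: se; rewrite !lt_min => /andP[se /andP[sla slb]].
exists `|i|%N, `|k|%N; rewrite !natr_absz !intr_norm.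
have [I0|[I1|I1]] := int_cases (R:=R) i; have [K0|[K1|K1]] := int_cases (R:=R) k;
  move: s0 se sla slb; rewrite ?I0 ?K0 ?normr0 => s0 se sla slb.
- by move: s0; rewrite !mul0r addr0 ltxx.
- exfalso; nra.
- exfalso; nra.
- exfalso; nra.
- exfalso; nra.
- rewrite (ger0_norm (le_trans ler01 I1)) (ler0_norm (le_trans K1 (lerN10 _))).
  rewrite mulNr opprK ger0_norm; [lra | lra].
- exfalso; nra.
- rewrite (ler0_norm (le_trans I1 (lerN10 _))) (ger0_norm (le_trans ler01 K1)).
  rewrite mulNr ler0_norm; [lra | lra].
- exfalso; nra.
Qed.
Lemma step_lem {R : realType} {u v0 d : R} : d != 0 -> 0 <= (u - v0) / d ->
  `|u - (v0 + (Num.truncn ((u - v0) / d))%:R * d)| < `|d|.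
Proof.
move=> d0 x0; have := truncn_itv x0; set k := Num.truncn _ => /andP[k1 k2].
have -> : u - (v0 + k%:R * d) = d * ((u - v0) / d - k%:R) by field.
rewrite normrM gtr_pMr ?normr_gt0// ger0_norm; last by rewrite subr_ge0.
by move: k2; rewrite -natr1; lra.
Qed.

Lemma dens {R : realType} {la lb : R} : 0 < la -> 0 < lb ->
  ~ (exists q : rat, la / lb = ratr q) ->
  forall u e N, 0 < e -> exists m j : nat,
    [/\ (N <= m)%N, (N <= j)%N & `|u - (m%:R * la - j%:R * lb)| < e].
Proof.
move=> la0 lb0 Hq u e N e0.
have [p [q /andP[d0 de]]] := natpair la0 lb0 Hq e e0.
set d := p%:R * la - q%:R * lb in d0 de.
have dn0 : d != 0 by rewrite -normr_gt0.
have FIN : forall m0 j0 : nat, (N <= m0)%N -> (N <= j0)%N ->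
    0 <= (u - (m0%:R * la - j0%:R * lb)) / d -> exists m j : nat,
    [/\ (N <= m)%N, (N <= j)%N & `|u - (m%:R * la - j%:R * lb)| < e].
  move=> m0 j0 Nm Nj h; have := step_lem dn0 h.
  set k := Num.truncn _ => hk.
  exists (m0 + k * p)%N, (j0 + k * q)%N; split.
  - exact: leq_trans Nm (leq_addr _ _).
  - exact: leq_trans Nj (leq_addr _ _).
  - apply: (lt_trans _ de); move: hk; rewrite !natrD !natrM /d.
    by congr (`|_| < _); ring.
have [dpos|dneg] := ltP 0 d.
  pose J := (N + Num.Def.archi_bound (`|N%:R * la - u| / lb)%R)%N.
  apply: (FIN N J) => //; first exact: leq_addr.
  apply: divr_ge0; last exact: ltW.
  have := @archi_boundP _ (`|N%:R * la - u| / lb) (divr_ge0 (normr_ge0 _) (ltW lb0)).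
  rewrite ltr_pdivrMr // => hb.
  have : N%:R * la - u <= `|N%:R * la - u| by exact: ler_norm.
  have h2 : 0 <= N%:R * lb by rewrite mulr_ge0 // ltW.
  rewrite /J natrD mulrDl; lra.
pose M := (N + Num.Def.archi_bound (`|u + N%:R * lb| / la)%R)%N.
have dlt : d < 0 by rewrite lt_neqAle dn0 dneg.
apply: (FIN M N) => //; first exact: leq_addr.
rewrite -[_ / d]opprK -mulrN -invrN -mulNr; apply: divr_ge0 ; last by rewrite oppr_ge0 ltW.
have := @archi_boundP _ (`|u + N%:R * lb| / la) (divr_ge0 (normr_ge0 _) (ltW la0)).
rewrite ltr_pdivrMr // => hb.
have : u + N%:R * lb <= `|u + N%:R * lb| by exact: ler_norm.
have h2 : 0 <= N%:R * la by rewrite mulr_ge0 // ltW.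
rewrite /M natrD mulrDl; lra.
Qed.
Lemma inv_bound {R : realType} (X Y : R) : 0 <= X -> 0 <= Y ->
  `|1 / (1 + X) - 1 / (1 + Y)| <= `|Y - X|.
Proof.
move=> X0 Y0.
have X1 : 0 < 1 + X by lra. have Y1 : 0 < 1 + Y by lra.
have -> : 1 / (1 + X) - 1 / (1 + Y) = (Y - X) / ((1 + X) * (1 + Y)).
  by field; rewrite !gt_eqF.
rewrite normrM normfV (gtr0_norm (mulr_gt0 X1 Y1)).
rewrite ler_pdivrMr ?mulr_gt0 //; apply: ler_peMr; first exact: normr_ge0.
nra.
Qed.

Lemma pow_expR {R : realType} (c : R) (m : nat) : 0 < c -> c ^+ m = expR (m%:R * ln c).
Proof.
move=> c0; rewrite mulr_natl -lnXn // lnK // posrE exprn_gt0 //.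
Qed.

Lemma t_expR {R : realType} (a b : R) (m j : nat) : 1 < a -> 1 < b ->
  a ^- m / (a ^- m + b ^- j) = 1 / (1 + expR (m%:R * ln a - j%:R * ln b)).
Proof.
move=> a1 b1; have a0 : 0 < a by lra. have b0 : 0 < b by lra.
rewrite expRD expRN -!pow_expR //.
have am : a ^+ m != 0 by rewrite gt_eqF // exprn_gt0.
have bj : b ^+ j != 0 by rewrite gt_eqF // exprn_gt0.
have s : a ^+ m + b ^+ j != 0 by rewrite gt_eqF // addr_gt0 // exprn_gt0.
field; by rewrite am bj addrC s.
Qed.
Lemma approx_int {R : realType} (a b : R) : 1 < a -> 1 < b ->
  ~ (exists q : rat, ln a / ln b = ratr q) ->
  forall tau, 0 < tau < 1 -> forall e N, 0 < e -> exists m j : nat,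
   [/\ (N <= m)%N, (N <= j)%N & `|a ^- m / (a ^- m + b ^- j) - tau| < e].
Proof.
move=> a1 b1 Hq tau /andP[t0 t1] e N e0.
have la0 : 0 < ln a by exact: ln_gt0.
have lb0 : 0 < ln b by exact: ln_gt0.
set u := ln ((1 - tau) / tau).
have eu : expR u = (1 - tau) / tau by rewrite lnK // posrE divr_gt0 // subr_gt0.
have [δ δ0 Hδ] := @continuous_expR R u (ball (expR u) e) (nbhsx_ballx _ _ e0).
have [m [j [Nm Nj H]]] := dens la0 lb0 Hq u δ N δ0.
exists m, j; split => //.
rewrite t_expR //.
have phu : tau = 1 / (1 + expR u).
  rewrite eu; field; by rewrite gt_eqF // addrC subrK oner_neq0.
rewrite [X in `|_ - X|]phu.
apply: le_lt_trans (@inv_bound _ _ _ (ltW (expR_gt0 _)) (ltW (expR_gt0 _))) _.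
have := Hδ _ H; rewrite /ball /=.
by rewrite distrC.
Qed.
Lemma approx_all {R : realType} (a b : R) : 1 < a -> 1 < b ->
  ~ (exists q : rat, ln a / ln b = ratr q) ->
  forall tau, 0 <= tau <= 1 -> forall e N, 0 < e -> exists m j : nat,
   [/\ (N <= m)%N, (N <= j)%N & `|a ^- m / (a ^- m + b ^- j) - tau| < e].
Proof.
move=> a1 b1 Hq tau /andP[t0 t1] e N e0.
set eta := Num.min e 1 / 2.
have eta0 : 0 < eta by rewrite divr_gt0 // lt_min e0 ltr01.
have etae : eta <= e / 2 by rewrite ler_pM2r // ge_min lexx.
have eta1 : eta <= 1 / 2 by rewrite ler_pM2r // ge_min lexx orbT.
have tp : 0 < tau * (1 - eta) + eta / 2 < 1 by apply/andP; split; nra.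
have e2 : 0 < e / 2 by rewrite divr_gt0.
have [m [j [Nm Nj H]]] := @approx_int _ a b a1 b1 Hq _ tp (e / 2) N e2.
exists m, j; split => //.
move: H; rewrite !ltr_distl => /andP[h1 h2]; apply/andP; split; nra.
Qed.

Lemma seq_from_approx {R : realType} {T : nat -> nat -> R} {tau : R} :
  (forall e N, 0 < e -> exists m j : nat,
     [/\ (N <= m)%N, (N <= j)%N & `|T m j - tau| < e]) ->
  exists m j : nat -> nat, [/\ (forall n, (n < m n)%N), (forall n, (n < j n)%N) &
     (fun n => T (m n) (j n)) @ \oo --> tau].
Proof.
move=> H.
have H' : forall n : nat, exists mj : nat * nat,
    [/\ (n < mj.1)%N, (n < mj.2)%N & `|T mj.1 mj.2 - tau| < 1 / n.+1%:R].
  move=> n; have [m [j [h1 h2 h3]]] := H (1 / n.+1%:R) n.+1 (divr_gt0 ltr01 (ltr0Sn _ _)).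
  by exists (m, j).
have [g Hg] := choice H'.
exists (fun n => (g n).1), (fun n => (g n).2); split.
- by move=> n; have [] := Hg n.
- by move=> n; have [] := Hg n.
apply/cvgrPdist_lt => e e0.
pose N0 := Num.Def.archi_bound (1 / e).
have hN0 := @archi_boundP _ (1 / e) (divr_ge0 ler01 (ltW e0)).
apply: (@nat_ev _ N0) => n Nn; have [_ _ h] := Hg n.
rewrite distrC; apply: (lt_le_trans h).
have nN : (N0%:R : R) <= n%:R by rewrite ler_nat.
rewrite ler_pdivrMr ?ltr0Sn //.
move: hN0; rewrite ltr_pdivrMr // => hN0.
rewrite -natr1; nra.
Qed.
Lemma part2 {R : realType} (a b : R) (f : R -> R) (Rr Ll : R) :
  1 < a -> 1 < b ->
  (fun n => f (a ^- n) / a ^- n) @ \oo --> Rr ->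
  (fun n => f (- b ^- n) / (- b ^- n)) @ \oo --> Ll ->
  ~ (exists q : rat, ln a / ln b = ratr q) ->
  forall x : R, Num.min Ll Rr <= x <= Num.max Ll Rr -> seq_cord_deriv a b f x%:E.
Proof.
move=> a1 b1 HR HL Hq x /andP[x1 x2].
have [tau [t01 tx]] : exists tau, 0 <= tau <= 1 /\ tau * Rr + (1 - tau) * Ll = x.
  have [h|h|h] := ltgtP Ll Rr.
  - rewrite (min_l (ltW h)) (max_r (ltW h)) in x1 x2.
    have d0 : Rr - Ll != 0 by rewrite subr_eq0 gt_eqF.
    exists ((x - Ll) / (Rr - Ll)); split; last by field.
    apply/andP; split; first by rewrite divr_ge0 // subr_ge0 // ltW.
    by rewrite ler_pdivrMr ?subr_gt0 // mul1r lerB.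
  - rewrite (min_r (ltW h)) (max_l (ltW h)) in x1 x2.
    have d0 : Ll - Rr != 0 by rewrite subr_eq0 gt_eqF.
    exists ((Ll - x) / (Ll - Rr)); split; last by field.
    apply/andP; split; first by rewrite divr_ge0 // subr_ge0 // ltW.
    by rewrite ler_pdivrMr ?subr_gt0 // mul1r lerB.
  - rewrite h minxx maxxx in x1 x2.
    exists 0; split; first by rewrite lexx ler01.
    by rewrite mul0r add0r subr0 mul1r h; apply/eqP; rewrite eq_le x1 x2.
have [m [j [Hm Hj Ht]]] := seq_from_approx (@approx_all _ a b a1 b1 Hq _ t01).
rewrite -tx; exact: (@build_scd _ a b f Rr Ll tau m j a1 b1 HR HL Hm Hj Ht).
Qed.
Definition phi {R : realType} (v : R) := 1 / (1 + expR v).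
Definition wf {R : realType} (Rr Ll t : R) := t * Rr + (1 - t) * Ll.
Definition Ts {R : realType} (la lb t : R) :=
  exists m j : nat, t = phi (m%:R * la - j%:R * lb).

Lemma wf_bounds {R : realType} (Rr Ll t : R) : 0 <= t <= 1 ->
  Num.min Ll Rr <= wf Rr Ll t <= Num.max Ll Rr.
Proof.
move=> /andP[t0 t1]; rewrite /wf.
have [h|h] := boolP (Ll <= Rr).
  rewrite (min_l h) (max_r h); apply/andP; split; nra.
have h' : Rr <= Ll by rewrite ltW // ltNge.
rewrite (min_r h') (max_l h'); apply/andP; split; nra.
Qed.

Lemma lim_le {R : realType} {u : nat -> R} {l : R} (M : R) :
  u @ \oo --> l -> (forall n, u n <= M) -> l <= M.
Proof.
move=> Hu HM; rewrite leNgt; apply/negP => lM.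
have e0 : 0 < l - M by rewrite subr_gt0.
have [N HN] := ev_nat (@cvgr_dist_lt _ _ _ _ _ _ _ Hu _ e0).
have := HN N (leqnn N); have := HM N; rewrite ltr_distl; lra.
Qed.

Lemma lim_ge {R : realType} {u : nat -> R} {l : R} (M : R) :
  u @ \oo --> l -> (forall n, M <= u n) -> M <= l.
Proof.
move=> Hu HM; rewrite leNgt; apply/negP => lM.
have e0 : 0 < M - l by rewrite subr_gt0.
have [N HN] := ev_nat (@cvgr_dist_lt _ _ _ _ _ _ _ Hu _ e0).
have := HN N (leqnn N); have := HM N; rewrite ltr_distl; lra.
Qed.

Lemma srep {R : realType} (a b : R) (f : R -> R) (Rr Ll : R) (l : \bar R) :
  1 < a -> 1 < b ->
  (fun n => f (a ^- n) / a ^- n) @ \oo --> Rr ->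
  (fun n => f (- b ^- n) / (- b ^- n)) @ \oo --> Ll ->
  seq_cord_deriv a b f l ->
  exists l0 : R, [/\ l = l0%:E, Num.min Ll Rr <= l0 <= Num.max Ll Rr &
    exists t : nat -> R, (forall n, Ts (ln a) (ln b) (t n)) /\
      (fun n => wf Rr Ll (t n)) @ \oo --> l0].
Proof.
move=> a1 b1 HR HL [hp [kp [hp0 [kp0 [Hh [Hk [Dh [Dk HQ]]]]]]]].
have HW := @cvg_W _ a b f Rr Ll hp kp l a1 b1 HR HL hp0 kp0 Hh Hk Dh Dk HQ.
set t := fun n => hp n / (hp n + kp n).
have t01 : forall n, 0 <= t n <= 1.
  move=> n; have := hp0 n; have := kp0 n; rewrite /t => k0 h0.
  apply/andP; split; first by rewrite divr_ge0 // ltW // addr_gt0.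
  by rewrite ler_pdivrMr ?addr_gt0 // mul1r lerDl ltW.
have wb : forall n, Num.min Ll Rr <= wf Rr Ll (t n) <= Num.max Ll Rr.
  by move=> n; apply: wf_bounds.
have Tt : forall n, Ts (ln a) (ln b) (t n).
  move=> n; rewrite /t.
  have [m hm] : exists m : nat, hp n = a ^- m.
    case: (Dh n) => [h0|[m _ [->|h]]]; first by move: (hp0 n); rewrite h0 ltxx.
      by exists m.
    by move: (hp0 n); rewrite h oppr_gt0 ltNge (ltW (powV_gt0 _ b1)).
  have [j hj] : exists j : nat, kp n = b ^- j.
    case: (Dk n) => [h0|[j _ [h|h]]].
    - by move: (kp0 n); rewrite -[kp n]opprK h0 oppr0 ltxx.
    - by move: (kp0 n); rewrite -oppr_lt0 h ltNge (ltW (powV_gt0 _ a1)).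
    - by exists j; apply: oppr_inj.
  by exists m, j; rewrite hm hj t_expR.
clear HQ; move: HW; case: l => [l0||] HW.
- exists l0; split => //; last first.
    by exists t; split => //; exact: (fine_cvg HW).
  have Hf : (fun n => wf Rr Ll (t n)) @ \oo --> l0 by exact: fine_cvg HW.
  apply/andP; split.
    have := @lim_ge _ (fun n => wf Rr Ll (t n)) l0 (Num.min Ll Rr) Hf.
    by apply => n; have /andP[] := wb n.
  by apply: (@lim_le _ (fun n => wf Rr Ll (t n)) _ _ Hf) => n; have /andP[] := wb n.
- exfalso; have [N HN] := ev_nat ((cvgeyPge _).1 HW (Num.max Ll Rr + 1)).
  have := HN N (leqnn N); rewrite lee_fin; have := wb N; rewrite /wf /t => /andP[w1 w2]; lra.
- exfalso; have [N HN] := ev_nat ((cvgeNyPle _).1 HW (Num.min Ll Rr - 1)).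
  have := HN N (leqnn N); rewrite lee_fin; have := wb N; rewrite /wf /t => /andP[w1 w2]; lra.
Qed.
Lemma rat_struct {R : realType} (a b : R) : 1 < a -> 1 < b ->
  (exists q : rat, ln a / ln b = ratr q) ->
  exists P Q : nat, [/\ (0 < P)%N, (0 < Q)%N & P%:R * ln a = Q%:R * ln b].
Proof.
move=> a1 b1 [q hq].
have la0 : 0 < ln a by exact: ln_gt0.
have lb0 : 0 < ln b by exact: ln_gt0.
move: hq; rewrite -(divq_num_den q) fmorph_div !rmorph_int => hq.
have d0 : (0 : R) < (denq q)%:~R by rewrite ltr0z denq_gt0.
have n0 : (0 : R) < (numq q)%:~R.
  have : 0 < ln a / ln b by rewrite divr_gt0.
  by rewrite hq pmulr_lgt0 ?invr_gt0.
exists `|denq q|%N, `|numq q|%N; split.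
- by rewrite absz_gt0 denq_neq0.
- by rewrite absz_gt0 -(intr_eq0 R) gt_eqF.
- rewrite !natr_absz !intr_norm (gtr0_norm d0) (gtr0_norm n0).
  move: hq => /eqP; rewrite (eqr_div _ _ (negbT (gt_eqF lb0)) (negbT (gt_eqF d0))) => /eqP; lra.
Qed.

Definition LAT {R : realType} (c v1 v2 : R) := v1 = v2 \/ c <= v2 - v1 \/ c <= v1 - v2.

Lemma lat_Vs {R : realType} (la lb : R) (P Q : nat) : 0 < la -> (0 < Q)%N ->
  P%:R * la = Q%:R * lb -> forall m1 j1 m2 j2 : nat,
  LAT (la / Q%:R) (m1%:R * la - j1%:R * lb) (m2%:R * la - j2%:R * lb).
Proof.
move=> la0 Q0 hPQ m1 j1 m2 j2.
have Qn : (Q%:R : R) != 0 by rewrite pnatr_eq0 -lt0n.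
have hlb : lb = P%:R * la / Q%:R by rewrite hPQ mulrAC divff // mul1r.
set c := la / Q%:R.
have key : (m2%:R * la - j2%:R * lb) - (m1%:R * la - j1%:R * lb) =
    c * ((m2 * Q + j1 * P)%N%:R - (m1 * Q + j2 * P)%N%:R).
  by rewrite /c hlb !natrD !natrM; field.
have c0 : 0 < c by rewrite /c divr_gt0 // ltr0n.
move: key.
set N1 := (m1 * Q + j2 * P)%N; set N2 := (m2 * Q + j1 * P)%N => key.
rewrite /LAT; have [h|h|h] := ltngtP N1 N2.
- right; left; rewrite key; have : (N1%:R + 1 : R) <= N2%:R by rewrite natr1 ler_nat.
  nra.
- right; right; have key' : (m1%:R * la - j1%:R * lb) - (m2%:R * la - j2%:R * lb) = c * (N1%:R - N2%:R) by rewrite -opprB key; ring.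
  rewrite key'; have : (N2%:R + 1 : R) <= N1%:R by rewrite natr1 ler_nat.
  nra.
- left; apply/eqP; rewrite -subr_eq0 -opprB key h subrr mulr0 oppr0 //.
Qed.
Definition muf {R : realType} (c tau : R) := (expR c - 1) * (1 - tau) * tau / 4.
Definition deltaf {R : realType} (c tau : R) :=
  Num.min (tau / 2) (Num.min ((1 - tau) / 2) (muf c tau / 2)).

Lemma deltaf_gt0 {R : realType} (c tau : R) : 0 < c -> 0 < tau < 1 -> 0 < deltaf c tau.
Proof.
move=> c0 /andP[t0 t1]; have r1 : 1 < expR c by rewrite expR_gt1.
rewrite /deltaf /muf !lt_min; apply/andP; split; first lra.
apply/andP; split; first lra.
apply: divr_gt0 => //; apply: divr_gt0 => //; apply: mulr_gt0; last by [].
apply: mulr_gt0; lra.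
Qed.

Lemma sep_dir {R : realType} (c tau v1 v2 : R) : 0 < c -> 0 < tau < 1 ->
  c <= v2 - v1 -> `|phi v1 - tau| < deltaf c tau -> `|phi v2 - tau| < deltaf c tau -> False.
Proof.
move=> c0 /andP[ta tb] hv.
have r1 : 1 < expR c by rewrite expR_gt1.
rewrite /deltaf !lt_min !ltr_distl /phi.
set t1 := 1 / (1 + expR v1); set t2 := 1 / (1 + expR v2).
move=> /andP[/andP[a1 a2] /andP[/andP[a3 a4] /andP[a5 a6]]].
move=> /andP[/andP[b1 b2] /andP[/andP[b3 b4] /andP[b5 b6]]].
have E10 := expR_gt0 v1; have E20 := expR_gt0 v2.
have hE : expR c * expR v1 <= expR v2.
  by rewrite -expRD ler_expR; lra.
have h1 : t1 * expR v1 = 1 - t1 by rewrite /t1; field; rewrite gt_eqF // addr_gt0.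
have h12 : t1 - t2 = t1 * t2 * (expR v2 - expR v1).
  by rewrite /t1 /t2; field; rewrite !gt_eqF // addr_gt0.
have t10 : 0 < t1 by rewrite /t1 divr_gt0 // addr_gt0.
have t20 : 0 < t2 by rewrite /t2 divr_gt0 // addr_gt0.
have h3 : t1 * t2 * ((expR c - 1) * expR v1) <= t1 * t2 * (expR v2 - expR v1).
  by rewrite ler_pM2l ?mulr_gt0 //; lra.
have h4 : t1 * t2 * ((expR c - 1) * expR v1) = (expR c - 1) * t2 * (1 - t1).
  by rewrite -h1; ring.
have h5' : (tau / 2) * ((1 - tau) / 2) <= t2 * (1 - t1).
  apply: ler_pM; lra.
have rc : 0 <= expR c - 1 by lra.
have h5 := ler_wpM2l rc h5'.
move: a5 a6 b5 b6; rewrite /muf; lra.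
Qed.
Lemma phi01 {R : realType} (v : R) : 0 < phi v < 1.
Proof.
rewrite /phi; have := expR_gt0 v => E0.
rewrite divr_gt0 ?addr_gt0 //= ltr_pdivrMr ?addr_gt0 // mul1r ltrDl //.
Qed.

Lemma sep {R : realType} (c tau : R) : 0 < c -> tau != 0 -> tau != 1 ->
  exists2 d, 0 < d & forall v1 v2, LAT c v1 v2 ->
    `|phi v1 - tau| < d -> `|phi v2 - tau| < d -> phi v1 = phi v2.
Proof.
move=> c0 t0 t1.
have [tn|tp] := ltP tau 0.
  exists (- tau); first by rewrite oppr_gt0.
  move=> v1 v2 _; have := phi01 v1; rewrite ltr_distl; lra.
have tp' : 0 < tau by rewrite lt_neqAle eq_sym t0 tp.
have [tl|tg] := ltP tau 1; last first.
  have tg' : 1 < tau by rewrite lt_neqAle eq_sym t1 tg.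
  exists (tau - 1); first by rewrite subr_gt0.
  move=> v1 v2 _; have := phi01 v1; rewrite ltr_distl; lra.
have t01 : 0 < tau < 1 by rewrite tp' tl.
exists (deltaf c tau); first exact: deltaf_gt0.
move=> v1 v2 [->//|[h|h]] h1 h2; exfalso.
  exact: (@sep_dir _ c tau v1 v2 c0 t01 h h1 h2).
exact: (@sep_dir _ c tau v2 v1 c0 t01 h h2 h1).
Qed.
Lemma nbhs_Eball {R : realType} {r e : R} : 0 < e ->
  nbhs (r%:E) (fun x : \bar R => exists2 u : R, x = u%:E & `|r - u| < e).
Proof.
move=> e0; apply/nbhs_EFin.
apply: filterS (nbhsx_ballx r e e0) => u hu; exists u => //.
Qed.

Lemma lim_ev_const {R : realType} (u : nat -> R) (l C : R) N :
  u @ \oo --> l -> (forall n, (N <= n)%N -> u n = C) -> l = C.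
Proof.
move=> Hu HC; apply/eqP; rewrite -subr_eq0 -normr_eq0; apply/eqP.
apply/le_anti; rewrite normr_ge0 andbT; apply/ler_addgt0Pr => e e0.
rewrite add0r.
have [M HM] := ev_nat (@cvgr_dist_lt _ _ _ _ _ _ _ Hu _ e0).
have := HM (maxn N M) (leq_maxr _ _); rewrite HC ?leq_maxl // => h.
exact: ltW.
Qed.

Lemma part1a {R : realType} (a b : R) (f : R -> R) (Rr Ll : R) :
  1 < a -> 1 < b ->
  (fun n => f (a ^- n) / a ^- n) @ \oo --> Rr ->
  (fun n => f (- b ^- n) / (- b ^- n)) @ \oo --> Ll ->
  (exists q : rat, ln a / ln b = ratr q) ->
  limit_point (seq_cord_deriv a b f) `<=` [set Rr%:E; Ll%:E].
Proof.
move=> a1 b1 HR HL Hq y LP.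
have [P [Q [P0 Q0 hPQ]]] := @rat_struct _ a b a1 b1 Hq.
have la0 : 0 < ln a by exact: ln_gt0.
have LATv := @lat_Vs _ (ln a) (ln b) P Q la0 Q0 hPQ.
set c := ln a / Q%:R in LATv.
have c0 : 0 < c by rewrite /c divr_gt0 // ltr0n.
rewrite /=.
have [->|yR] := eqVneq y Rr%:E; first by left.
have [->|yL] := eqVneq y Ll%:E; first by right.
exfalso.
have SR := @srep _ a b f Rr Ll.
move: LP yR yL; case: y => [r| |] LP yR yL.
- have rR : r != Rr by apply: contra yR => /eqP ->.
  have rL : r != Ll by apply: contra yL => /eqP ->.
  have [eRL|nRL] := eqVneq Rr Ll.
    have rL0 : 0 < `|r - Ll| by rewrite normr_gt0 subr_eq0.
    have [l [_ Sl [u lu] hu]] := LP _ (nbhs_Eball rL0); rewrite lu in Sl.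
    have [l0 [[ul0] _ [t [_ Ht]]]] := SR _ a1 b1 HR HL Sl.
    rewrite -ul0 in Ht.
    have ul : u = Ll.
      apply/le_anti/andP; split.
        by apply: (lim_le _ Ht) => n; rewrite /wf eRL; lra.
      by apply: (lim_ge _ Ht) => n; rewrite /wf eRL; lra.
    by move: hu; rewrite ul ltxx.
  have dRL : Rr - Ll != 0 by rewrite subr_eq0.
  set tau := (r - Ll) / (Rr - Ll).
  have tau0 : tau != 0 by rewrite /tau mulf_neq0 ?invr_eq0 // subr_eq0.
  have tau1 : tau != 1.
    apply: contra rR => /eqP h; apply/eqP.
    have : r - Ll = tau * (Rr - Ll) by rewrite /tau divfK.
    rewrite h mul1r; exact: addIr.
  have [d d0 SEPh] := @sep _ c tau c0 tau0 tau1.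
  have ndRL : 0 < `|Rr - Ll| by rewrite normr_gt0.
  set eps := d * `|Rr - Ll|.
  have eps0 : 0 < eps by rewrite mulr_gt0.
  have idw : forall t, `|r - wf Rr Ll t| = `|Rr - Ll| * `|tau - t|.
    move=> t; rewrite -normrM; congr `|_|; rewrite /wf /tau; field; exact: dRL.
  have K : forall u : R, seq_cord_deriv a b f u%:E -> `|r - u| < eps ->
      exists m j : nat, (u = wf Rr Ll (phi (m%:R * ln a - j%:R * ln b))) /\
        (`|phi (m%:R * ln a - j%:R * ln b) - tau| < d).
    move=> u Su ru.
    have [l0 [[ul0] _ [t [Tt Ht]]]] := SR _ a1 b1 HR HL Su.
    rewrite -ul0 in Ht.
    have e0 : 0 < eps - `|r - u| by rewrite subr_gt0.
    have [N HN] := ev_nat (@cvgr_dist_lt _ _ _ _ _ _ _ Ht _ e0).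
    have close : forall n, (N <= n)%N -> `|t n - tau| < d.
      move=> n Nn; have h := HN n Nn.
      have : `|r - wf Rr Ll (t n)| < eps.
        apply: le_lt_trans (ler_distD u _ _) _.
        move: h; rewrite distrC; lra.
      by rewrite idw /eps [d * _]mulrC ltr_pM2l // distrC.
    have [m [j tN]] := Tt N.
    exists m, j; split; last by rewrite -tN; exact: close.
    rewrite -tN; apply: (@lim_ev_const _ _ _ _ N Ht) => n Nn.
    have [m' [j' tn]] := Tt n.
    congr wf; rewrite tn tN; apply: SEPh; first exact: LATv.
      by rewrite -tn; exact: close.
    by rewrite -tN; exact: close.
  have [l1 [l1r Sl1 [u1 lu1] hu1]] := LP _ (nbhs_Eball eps0); rewrite lu1 in Sl1 l1r.
  have ur1 : 0 < Num.min eps `|r - u1|.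
    rewrite lt_min eps0 normr_gt0 subr_eq0 eq_sym.
    by apply: contra l1r => /eqP ->.
  have [l2 [_ Sl2 [u2 lu2] hu2]] := LP _ (nbhs_Eball ur1); rewrite lu2 in Sl2.
  move: hu2; rewrite lt_min => /andP[hu2 hu2'].
  have [m1 [j1 [e1 c1]]] := K _ Sl1 hu1.
  have [m2 [j2 [e2 c2]]] := K _ Sl2 hu2.
  have : u1 = u2 by rewrite e1 e2; congr wf; apply: SEPh => //; exact: LATv.
  by move=> e; move: hu2'; rewrite e ltxx.
- have [l [_ Sl Ml]] := LP _ (ereal_nbhs_pinfty_gt (num_real (Num.max Ll Rr))).
  have [l0 [lE /andP[_ l0M] _]] := SR _ a1 b1 HR HL Sl.
  by move: Ml; rewrite lE lte_fin ltNge l0M.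
- have [l [_ Sl Ml]] := LP _ (ereal_nbhs_ninfty_lt (num_real (Num.min Ll Rr))).
  have [l0 [lE /andP[l0M _] _]] := SR _ a1 b1 HR HL Sl.
  by move: Ml; rewrite lE lte_fin ltNge l0M.
Qed.
Lemma phiN {R : realType} (x : R) : 1 - phi (- x) = phi x.
Proof.
rewrite /phi expRN; have E0 := expR_gt0 x.
field; rewrite !gt_eqF // ?addr_gt0 // ?invr_gt0 //.
Qed.

Lemma phi_small {R : realType} (x K d : R) : 0 <= x -> 0 <= K -> 0 < d -> K < x * d ->
  phi x * K < d.
Proof.
move=> x0 K0 d0 hK; rewrite /phi.
have E1 := expR_ge1Dx x.
have p : 0 < 1 + expR x by rewrite addr_gt0 // expR_gt0.
rewrite mul1r mulrC -ltr_pdivlMr // invrK.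
have := ler_wpM2l (ltW d0) E1; lra.
Qed.

Lemma const_scd {R : realType} (a b : R) (f : R -> R) (Rr Ll : R) :
  1 < a -> 1 < b ->
  (fun n => f (a ^- n) / a ^- n) @ \oo --> Rr ->
  (fun n => f (- b ^- n) / (- b ^- n)) @ \oo --> Ll ->
  (exists q : rat, ln a / ln b = ratr q) ->
  forall m0 j0 : nat,
  seq_cord_deriv a b f (wf Rr Ll (phi (m0%:R * ln a - j0%:R * ln b)))%:E.
Proof.
move=> a1 b1 HR HL Hq m0 j0.
have [P [Q [P0 Q0 hPQ]]] := @rat_struct _ a b a1 b1 Hq.
pose m n := (m0 + P * n.+1)%N; pose j n := (j0 + Q * n.+1)%N.
apply: (@build_scd _ a b f Rr Ll _ m j a1 b1 HR HL).
- move=> n; rewrite /m; apply: leq_trans (leq_addl m0 _).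
  by rewrite mulnC leq_pmulr.
- move=> n; rewrite /j; apply: leq_trans (leq_addl j0 _).
  by rewrite mulnC leq_pmulr.
suff -> : (fun n => a ^- m n / (a ^- m n + b ^- j n)) =
   (fun=> phi (m0%:R * ln a - j0%:R * ln b)) by exact: cvg_cst.
apply/funext => n; rewrite t_expR // /phi; congr (1 / (1 + expR _)).
have h : P%:R * n.+1%:R * ln a = Q%:R * n.+1%:R * ln b :> R by rewrite mulrAC hPQ mulrAC.
rewrite /m /j !natrD !natrM !mulrDl; lra.
Qed.
Lemma part1b {R : realType} (a b : R) (f : R -> R) (Rr Ll : R) :
  1 < a -> 1 < b ->
  (fun n => f (a ^- n) / a ^- n) @ \oo --> Rr ->
  (fun n => f (- b ^- n) / (- b ^- n)) @ \oo --> Ll ->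
  (exists q : rat, ln a / ln b = ratr q) -> Rr != Ll ->
  limit_point (seq_cord_deriv a b f) Rr%:E /\ limit_point (seq_cord_deriv a b f) Ll%:E.
Proof.
move=> a1 b1 HR HL Hq nRL.
have la0 : 0 < ln a by exact: ln_gt0.
have lb0 : 0 < ln b by exact: ln_gt0.
have CS := @const_scd _ a b f Rr Ll a1 b1 HR HL Hq.
have K0 : 0 < `|Rr - Ll| by rewrite normr_gt0 subr_eq0.
split => U HU.
- have HU' : \forall r \near Rr, U r%:E := HU.
  have [d d0 Hd] := (nbhs_ballP _ _).1 HU'.
  pose j0 := Num.Def.archi_bound (`|Rr - Ll| / (ln b * d)).
  have hj := @archi_boundP _ (`|Rr - Ll| / (ln b * d)) (divr_ge0 (normr_ge0 _) (ltW (mulr_gt0 lb0 d0))).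
  move: hj; rewrite ltr_pdivrMr ?mulr_gt0 // -/j0 => hj.
  set x := j0%:R * ln b.
  have x0 : 0 <= x by rewrite mulr_ge0 // ltW.
  have hs := @phi_small _ x `|Rr - Ll| d x0 (normr_ge0 _) d0 ltac:(rewrite /x; lra).
  set t := phi (0%:R * ln a - j0%:R * ln b).
  have tx : t = phi (- x) by rewrite /t /x mul0r sub0r.
  have idR : Rr - wf Rr Ll t = (1 - t) * (Rr - Ll) by rewrite /wf; ring.
  exists (wf Rr Ll t)%:E; split; last 1 first.
  + apply: Hd; rewrite /ball /= idR normrM tx phiN ger0_norm //.
    by have /andP[] := phi01 x => /ltW.
  + apply/negP => /eqP [] /eqP; apply/negP; rewrite eq_sym -subr_eq0 idR mulf_neq0 //.
      by rewrite subr_eq0 eq_sym; have /andP[_] := phi01 (0%:R * ln a - j0%:R * ln b) => /lt_eqF ->.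
    by rewrite subr_eq0.
  + exact: CS.
- have HU' : \forall r \near Ll, U r%:E := HU.
  have [d d0 Hd] := (nbhs_ballP _ _).1 HU'.
  pose m0 := Num.Def.archi_bound (`|Rr - Ll| / (ln a * d)).
  have hm := @archi_boundP _ (`|Rr - Ll| / (ln a * d)) (divr_ge0 (normr_ge0 _) (ltW (mulr_gt0 la0 d0))).
  move: hm; rewrite ltr_pdivrMr ?mulr_gt0 // -/m0 => hm.
  set x := m0%:R * ln a.
  have x0 : 0 <= x by rewrite mulr_ge0 // ltW.
  have hs := @phi_small _ x `|Rr - Ll| d x0 (normr_ge0 _) d0 ltac:(rewrite /x; lra).
  set t := phi (m0%:R * ln a - 0%:R * ln b).
  have tx : t = phi x by rewrite /t /x mul0r subr0.
  have idL : Ll - wf Rr Ll t = - (t * (Rr - Ll)) by rewrite /wf; ring.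
  exists (wf Rr Ll t)%:E; split; last 1 first.
  + apply: Hd; rewrite /ball /= idL normrN normrM tx ger0_norm //.
    by have /andP[] := phi01 x => /ltW.
  + apply/negP => /eqP [] /eqP; apply/negP; rewrite eq_sym -subr_eq0 idL oppr_eq0 mulf_neq0 //.
      by have /andP[] := phi01 (m0%:R * ln a - 0%:R * ln b) => /gt_eqF ->.
    by rewrite subr_eq0.
  + exact: CS.
Qed.
Theorem theorem4p7 (R : realType) (a b : R) (f : R -> R) (Rr Ll : R) :
  1 < a -> 1 < b -> f 0 = 0 ->
  (fun n : nat => f (a ^- n) / a ^- n) @ \oo --> Rr ->
  (fun n : nat => f (- b ^- n) / (- b ^- n)) @ \oo --> Ll ->
  ((exists q : rat, ln a / ln b = ratr q) ->
     limit_point (seq_cord_deriv a b f) `<=` [set Rr%:E; Ll%:E] /\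
     (Rr != Ll -> limit_point (seq_cord_deriv a b f) Rr%:E /\
                  limit_point (seq_cord_deriv a b f) Ll%:E)) /\
  (~ (exists q : rat, ln a / ln b = ratr q) ->
     forall x : R, Num.min Ll Rr <= x <= Num.max Ll Rr ->
       seq_cord_deriv a b f x%:E).
Proof.
move=> a1 b1 _ HR HL; split; last exact: (@part2 _ a b f Rr Ll a1 b1 HR HL).
move=> Hq; split; first exact: (@part1a _ a b f Rr Ll a1 b1 HR HL Hq).
exact: (@part1b _ a b f Rr Ll a1 b1 HR HL Hq).
Qed.
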